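(* Let $(M,g)$ be a $\mathcal{W}^{\star}$-symmetric space-time (i.e. $\nabla_m\mathcal{W}^{\star}_{ijkl}=0$) obeying Einstein's field equation for a purely electro-magnetic distribution, i.e. $R_{ij}=kT_{ij}$ with $k\neq0$ a constant and $T_{ij}$ a symmetric tensor with vanishing trace $g^{ij}T_{ij}=0$. Then the energy-momentum tensor is covariantly constant: $\nabla_m T_{jk}=0$.
   Context: A space-time is a $4$-dimensional Lorentzian manifold $(M,g)$ with Levi-Civita connection $\nabla$. $R_{ijkl}$ denotes the components of the Riemann curvature tensor, with index conventions such that the Ricci tensor is $R_{jk}=g^{il}R_{ijkl}$; $R=g^{jk}R_{jk}$ is the scalar curvature. The $\mathcal{W}^{\star}$-curvature tensor is $\mathcal{W}^{\star}_{ijkl}=R_{ijkl}-\tfrac{1}{3}\left[g_{jk}R_{il}-g_{jl}R_{ik}\right]$. *)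

(* Defs.v *)
From Stdlib Require Import Reals Lra List Arith ClassicalEpsilon.
Open Scope R_scope.

(* A point of a coordinate chart: only coordinates 0..3 are used. *)
Definition Pt := nat -> R.

Definition upd (x : Pt) (i : nat) (t : R) : Pt :=
  fun j => if Nat.eqb j i then t else x j.

(* partial derivative d f / d x^i at x (the limit, chosen by epsilon;
   meaningful wherever the derivative exists) *)
Definition pd (f : Pt -> R) (i : nat) (x : Pt) : R :=
  epsilon (inhabits 0)
    (fun l => derivable_pt_lim (fun t => f (upd x i t)) (x i) l).

Definition pds (l : list nat) (f : Pt -> R) : Pt -> R :=
  fold_right (fun i h => pd h i) f l.

Definition open4 (U : Pt -> Prop) : Prop :=
  forall x, U x -> exists eps, 0 < eps /\
    forall y, (forall i, (i < 4)%nat -> Rabs (y i - x i) < eps) -> U y.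

Definition smooth_on (U : Pt -> Prop) (f : Pt -> R) : Prop :=
  forall (l : list nat) (i : nat) (x : Pt),
    Forall (fun j => (j < 4)%nat) l -> (i < 4)%nat -> U x ->
    exists d, derivable_pt_lim (fun t => pds l f (upd x i t)) (x i) d.

Definition sum4 (f : nat -> R) : R := f 0%nat + f 1%nat + f 2%nat + f 3%nat.

Definition eta (a b : nat) : R :=
  if Nat.eqb a b then (if Nat.eqb a 0 then -1 else 1) else 0.

Definition lorentzian_on (U : Pt -> Prop) (g : nat -> nat -> Pt -> R) : Prop :=
  forall x, U x -> exists e : nat -> nat -> R,
    forall a b, (a < 4)%nat -> (b < 4)%nat ->
      sum4 (fun i => sum4 (fun j => g i j x * e a i * e b j)) = eta a b.

Section Geometry.
Variables (g gi : nat -> nat -> Pt -> R).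

Definition Gam (k i j : nat) (x : Pt) : R :=
  / 2 * sum4 (fun l => gi k l x *
      (pd (g j l) i x + pd (g i l) j x - pd (g i j) l x)).

Definition Rup (a b c d : nat) (x : Pt) : R :=
  pd (Gam a d b) c x - pd (Gam a c b) d x
  + sum4 (fun e => Gam a c e x * Gam e d b x - Gam a d e x * Gam e c b x).

(* R_{ijkl} = g(R(e_i,e_j)e_k, e_l); contraction g^{il} R_{ijkl} is Ricci *)
Definition Riem (i j k l : nat) (x : Pt) : R :=
  sum4 (fun a => g i a x * Rup a j l k x).

Definition Ric (j k : nat) (x : Pt) : R :=
  sum4 (fun i => sum4 (fun l => gi i l x * Riem i j k l x)).

Definition Rscal (x : Pt) : R :=
  sum4 (fun j => sum4 (fun k => gi j k x * Ric j k x)).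

Definition Wstar (i j k l : nat) (x : Pt) : R :=
  Riem i j k l x - / 3 * (g j k x * Ric i l x - g j l x * Ric i k x).

Definition cov2 (T : nat -> nat -> Pt -> R) (m j k : nat) (x : Pt) : R :=
  pd (T j k) m x
  - sum4 (fun a => Gam a m j x * T a k x + Gam a m k x * T j a x).

Definition cov4 (T : nat -> nat -> nat -> nat -> Pt -> R) (m i j k l : nat)
  (x : Pt) : R :=
  pd (T i j k l) m x
  - sum4 (fun a => Gam a m i x * T a j k l x + Gam a m j x * T i a k l x
                 + Gam a m k x * T i j a l x + Gam a m l x * T i j k a x).

End Geometry.

(* Main.v *)
Require Import Defs.
From Stdlib Require Import Reals List Arith ClassicalEpsilon Lra Lia.
From Stdlib Require Import FunctionalExtensionality PropExtensionality.
Open Scope R_scope.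

Definition det3 a b c d e f g h i := a*(e*i-f*h) - b*(d*i-f*g) + c*(d*h-e*g).
Definition sk (k r : nat) : nat := if Nat.ltb r k then r else S r.
Definition minor (A : nat -> nat -> R) (i j : nat) : R :=
  det3 (A (sk i 0) (sk j 0)) (A (sk i 0) (sk j 1)) (A (sk i 0) (sk j 2))
       (A (sk i 1) (sk j 0)) (A (sk i 1) (sk j 1)) (A (sk i 1) (sk j 2))
       (A (sk i 2) (sk j 0)) (A (sk i 2) (sk j 1)) (A (sk i 2) (sk j 2)).
Definition det4 (A : nat -> nat -> R) :=
  A 0%nat 0%nat * minor A 0 0 - A 0%nat 1%nat * minor A 0 1
  + A 0%nat 2%nat * minor A 0 2 - A 0%nat 3%nat * minor A 0 3.
Definition mul (A B : nat -> nat -> R) (i k : nat) : R :=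
  sum4 (fun j => A i j * B j k).
Definition adj (A : nat -> nat -> R) (i j : nat) : R :=
  (if Nat.even (i + j) then 1 else -1) * minor A j i.

Lemma detmul A B : det4 (mul A B) = det4 A * det4 B.
Proof. unfold det4, minor, det3, mul, sum4, sk; simpl. ring. Qed.

Ltac case4 i := destruct i as [|[|[|[|i]]]]; [| | | | exfalso; lia].

Lemma adj_mul A i k : (i < 4)%nat -> (k < 4)%nat ->
  mul (adj A) A i k = if Nat.eqb i k then det4 A else 0.
Proof.
  intros Hi Hk; case4 i; case4 k;
  unfold mul, adj, det4, minor, det3, sum4, sk; simpl; ring.
Qed.

Lemma mul_assoc X Y Z i k : mul (mul X Y) Z i k = mul X (mul Y Z) i k.
Proof. unfold mul, sum4; ring. Qed.

Lemma mul_id_r X Y c i k : (forall j l, (j < 4)%nat -> (l < 4)%nat ->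
   Y j l = if Nat.eqb j l then c else 0) -> (k < 4)%nat -> mul X Y i k = c * X i k.
Proof.
  intros HY Hk; unfold mul, sum4.
  rewrite !HY by lia. case4 k; simpl; ring.
Qed.

Lemma mul_id_l X Y c i k : (forall j l, (j < 4)%nat -> (l < 4)%nat ->
   X j l = if Nat.eqb j l then c else 0) -> (i < 4)%nat -> mul X Y i k = c * Y i k.
Proof.
  intros HX Hi; unfold mul, sum4.
  rewrite !HX by lia. case4 i; simpl; ring.
Qed.

Lemma left_inv (A B : nat -> nat -> R) :
  (forall i k, (i < 4)%nat -> (k < 4)%nat -> mul A B i k = if Nat.eqb i k then 1 else 0) ->
  forall i k, (i < 4)%nat -> (k < 4)%nat -> mul B A i k = if Nat.eqb i k then 1 else 0.
Proof.
  intros H i k Hi Hk.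
  assert (Hd : det4 (mul A B) = 1).
  { unfold det4, minor, det3, sk; simpl. rewrite !H by lia. simpl. ring. }
  rewrite detmul in Hd.
  assert (Hn : det4 A <> 0) by (intro E; rewrite E in Hd; lra).
  assert (HB : forall i k, (i < 4)%nat -> (k < 4)%nat -> B i k = / det4 A * adj A i k).
  { intros a b Ha Hb.
    replace (adj A a b) with (mul (adj A) (mul A B) a b)
      by (rewrite (mul_id_r (adj A) (mul A B) 1 a b H Hb); ring).
    rewrite <- mul_assoc.
    rewrite (mul_id_l (mul (adj A) A) B (det4 A) a b) by (auto; intros; apply adj_mul; auto).
    field. auto. }
  unfold mul, sum4. rewrite !HB by lia.
  replace (/ det4 A * adj A i 0%nat * A 0%nat k + / det4 A * adj A i 1%nat * A 1%nat k +
   / det4 A * adj A i 2%nat * A 2%nat k + / det4 A * adj A i 3%nat * A 3%nat k)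
   with (/ det4 A * mul (adj A) A i k) by (unfold mul, sum4; ring).
  rewrite adj_mul by auto. destruct (Nat.eqb i k); field; auto.
Qed.

Definition eqU (U : Pt -> Prop) (f h : Pt -> R) := forall y, U y -> f y = h y.

Lemma upd_same x i : upd x i (x i) = x.
Proof. apply functional_extensionality; intro j; unfold upd.
  destruct (Nat.eqb_spec j i); subst; auto. Qed.

Lemma upd_at x i t : upd x i t i = t.
Proof. unfold upd; rewrite Nat.eqb_refl; auto. Qed.

Lemma pd_val f i x d :
  derivable_pt_lim (fun t => f (upd x i t)) (x i) d -> pd f i x = d.
Proof.
  intro H; unfold pd.
  pose proof (epsilon_spec (inhabits 0) (fun l => derivable_pt_lim (fun t => f (upd x i t)) (x i) l) (ex_intro _ d H)) as E.
  exact (uniqueness_limite _ _ _ _ E H).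
Qed.

Lemma open_line U x i : open4 U -> U x -> (i < 4)%nat ->
  exists eps, 0 < eps /\ forall t, Rabs (t - x i) < eps -> U (upd x i t).
Proof.
  intros HU Hx Hi. destruct (HU x Hx) as [eps [He H]].
  exists eps; split; auto. intros t Ht. apply H. intros j Hj.
  unfold upd. destruct (Nat.eqb_spec j i); subst; auto.
  rewrite Rminus_diag, Rabs_R0; auto.
Qed.

Lemma deriv_congr U f h x i d : open4 U -> eqU U f h -> U x -> (i < 4)%nat ->
  derivable_pt_lim (fun t => f (upd x i t)) (x i) d ->
  derivable_pt_lim (fun t => h (upd x i t)) (x i) d.
Proof.
  intros HU Hfh Hx Hi Hd eps Heps.
  destruct (open_line U x i HU Hx Hi) as [e [He Hl]].
  destruct (Hd eps Heps) as [delta Hdel].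
  assert (Hp : 0 < Rmin delta e) by (apply Rmin_pos; [apply cond_pos | auto]).
  exists (mkposreal _ Hp). intros h0 Hh0 Hab. simpl in Hab.
  rewrite <- !Hfh.
  - apply Hdel; auto. eapply Rlt_le_trans; [exact Hab | apply Rmin_l].
  - apply Hl. rewrite Rminus_diag, Rabs_R0; auto.
  - apply Hl. replace (x i + h0 - x i) with h0 by ring.
    eapply Rlt_le_trans; [exact Hab | apply Rmin_r].
Qed.

Lemma eqU_sym U f h : eqU U f h -> eqU U h f.
Proof. intros H y Hy; symmetry; auto. Qed.

Lemma pd_congr U f h x i : open4 U -> eqU U f h -> U x -> (i < 4)%nat ->
  pd f i x = pd h i x.
Proof.
  intros HU Hfh Hx Hi. unfold pd. f_equal.
  apply functional_extensionality; intro l; apply propositional_extensionality.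
  split; apply deriv_congr with U; auto. apply eqU_sym; auto.
Qed.

Definition dex (f : Pt -> R) i x := exists d, derivable_pt_lim (fun t => f (upd x i t)) (x i) d.

Lemma dex_congr U f h x i : open4 U -> eqU U f h -> U x -> (i < 4)%nat ->
  dex f i x -> dex h i x.
Proof. intros HU H Hx Hi [d Hd]; exists d; eapply deriv_congr; eauto. Qed.

Lemma pd_spec f i x : dex f i x ->
  derivable_pt_lim (fun t => f (upd x i t)) (x i) (pd f i x).
Proof. intros [d Hd]. rewrite (pd_val _ _ _ _ Hd). auto. Qed.

Lemma dex_plus f h i x : dex f i x -> dex h i x -> dex (fun y => f y + h y) i x.
Proof.
  intros Hf Hh. exists (pd f i x + pd h i x).
  exact (derivable_pt_lim_plus _ _ _ _ _ (pd_spec _ _ _ Hf) (pd_spec _ _ _ Hh)).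
Qed.

Lemma pd_plus f h i x : dex f i x -> dex h i x ->
  pd (fun y => f y + h y) i x = pd f i x + pd h i x.
Proof.
  intros Hf Hh. apply pd_val.
  exact (derivable_pt_lim_plus _ _ _ _ _ (pd_spec _ _ _ Hf) (pd_spec _ _ _ Hh)).
Qed.

Lemma dex_mult f h i x : dex f i x -> dex h i x -> dex (fun y => f y * h y) i x.
Proof.
  intros Hf Hh. eexists.
  exact (derivable_pt_lim_mult _ _ _ _ _ (pd_spec _ _ _ Hf) (pd_spec _ _ _ Hh)).
Qed.

Lemma pd_mult f h i x : dex f i x -> dex h i x ->
  pd (fun y => f y * h y) i x = pd f i x * h x + f x * pd h i x.
Proof.
  intros Hf Hh. apply pd_val.
  pose proof (derivable_pt_lim_mult _ _ _ _ _ (pd_spec _ _ _ Hf) (pd_spec _ _ _ Hh)) as E.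
  unfold mult_fct in E. rewrite upd_same in E. exact E.
Qed.

Lemma pd_const c i x : pd (fun _ => c) i x = 0.
Proof. apply pd_val. exact (derivable_pt_lim_const c (x i)). Qed.

Lemma dex_const c i x : dex (fun _ => c) i x.
Proof. exists 0. exact (derivable_pt_lim_const c (x i)). Qed.

Definition crd (l : list nat) := Forall (fun j => (j < 4)%nat) l.

Definition smooth_upto (U : Pt -> Prop) n f := forall l i x, (length l <= n)%nat -> crd l ->
  (i < 4)%nat -> U x -> dex (pds l f) i x.

Lemma pds_congr U f h l : open4 U -> eqU U f h -> crd l -> eqU U (pds l f) (pds l h).
Proof.
  intros HU H; induction l as [|a l IH]; intros Hl y Hy; simpl; auto.
  inversion Hl; subst. apply pd_congr with U; auto.
Qed.

Lemma pds_sum U n A B : open4 U -> smooth_upto U n A -> smooth_upto U n B ->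
  forall l, (length l <= S n)%nat -> crd l ->
  eqU U (pds l (fun y => A y + B y)) (fun y => pds l A y + pds l B y).
Proof.
  intros HU HA HB l; induction l as [|a l IH]; intros Hlen Hl y Hy; simpl; auto.
  inversion Hl; subst. simpl in Hlen.
  rewrite (pd_congr U _ (fun y => pds l A y + pds l B y) y a) by (auto; intros z Hz; apply IH; auto; lia).
  apply pd_plus; [apply HA | apply HB]; auto; lia.
Qed.

Lemma smooth_upto_plus U n A B : open4 U -> smooth_upto U n A -> smooth_upto U n B ->
  smooth_upto U n (fun y => A y + B y).
Proof.
  intros HU HA HB l i x Hlen Hl Hi Hx.
  apply dex_congr with U (fun y => pds l A y + pds l B y); auto.
  - apply eqU_sym, pds_sum with n; auto.
  - apply dex_plus; auto.
Qed.

Lemma smooth_upto_of (U : Pt -> Prop) f n : smooth_on U f -> smooth_upto U n f.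
Proof. intros H l i x _ Hl Hi Hx. apply H; auto. Qed.

Lemma smooth_of_upto (U : Pt -> Prop) f : (forall n, smooth_upto U n f) -> smooth_on U f.
Proof. intros H l i x Hl Hi Hx. apply (H (length l)); auto. Qed.

Lemma pds_app l i f : pds (l ++ i :: nil) f = pds l (pd f i).
Proof. unfold pds. rewrite fold_right_app. reflexivity. Qed.

Lemma sm_pd (U : Pt -> Prop) f i : smooth_on U f -> (i < 4)%nat -> smooth_on U (pd f i).
Proof.
  intros H Hi l j x Hl Hj Hx. rewrite <- pds_app. apply H; auto.
  apply Forall_app; split; auto.
Qed.

Lemma smooth_upto_mult U : open4 U -> forall n A B, smooth_on U A -> smooth_on U B ->
  smooth_upto U n (fun y => A y * B y).
Proof.
  intros HU n; induction n as [|n IH]; intros A B HA HB l i x Hlen Hl Hi Hx.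
  - destruct l; simpl in Hlen; [|lia]. simpl.
    apply dex_mult; [apply (HA nil) | apply (HB nil)]; auto.
  - destruct l as [|a0 l0].
    + simpl. apply dex_mult; [apply (HA nil) | apply (HB nil)]; auto.
    + destruct (exists_last (l := a0 :: l0) ltac:(discriminate)) as [l' [b Hlb]].
      rewrite Hlb in *. unfold crd in Hl. apply Forall_app in Hl. destruct Hl as [Hl' Hb].
      inversion Hb; subst.
      rewrite length_app in Hlen; simpl in Hlen.
      rewrite pds_app.
      set (P := fun y => pd A b y * B y).
      set (Q := fun y => A y * pd B b y).
      assert (HP : smooth_upto U n P) by (apply IH; auto; apply sm_pd; auto).
      assert (HQ : smooth_upto U n Q) by (apply IH; auto; apply sm_pd; auto).
      apply dex_congr with U (fun y => pds l' P y + pds l' Q y); auto.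
      * intros y Hy. rewrite (pds_congr U (pd (fun y => A y * B y) b) (fun y => P y + Q y)); auto.
        -- symmetry. apply (pds_sum U n P Q HU HP HQ l'); auto; lia.
        -- intros z Hz. unfold P, Q. apply pd_mult; [apply (HA nil) | apply (HB nil)]; auto.
      * apply dex_plus; [apply HP | apply HQ]; auto; lia.
Qed.

Lemma sm_mult U A B : open4 U -> smooth_on U A -> smooth_on U B ->
  smooth_on U (fun y => A y * B y).
Proof. intros. apply smooth_of_upto; intro n; apply smooth_upto_mult; auto. Qed.

Lemma sm_plus U A B : open4 U -> smooth_on U A -> smooth_on U B ->
  smooth_on U (fun y => A y + B y).
Proof. intros. apply smooth_of_upto; intro n; apply smooth_upto_plus; auto; apply smooth_upto_of; auto. Qed.

Lemma pds_const c l : exists c', pds l (fun _ => c) = fun _ => c'.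
Proof.
  induction l as [|a l [c' IH]]; simpl. exists c; auto.
  exists 0. rewrite IH. apply functional_extensionality; intro; apply pd_const.
Qed.

Lemma sm_const (U : Pt -> Prop) c : smooth_on U (fun _ => c).
Proof.
  intros l i x _ _ _. destruct (pds_const c l) as [c' E]. rewrite E.
  exists 0. exact (derivable_pt_lim_const c' (x i)).
Qed.

Lemma sm_ext (U : Pt -> Prop) f h : (forall y, f y = h y) -> smooth_on U f -> smooth_on U h.
Proof. intros E H. replace h with f by (apply functional_extensionality; auto). auto. Qed.

Lemma sm_minus U A B : open4 U -> smooth_on U A -> smooth_on U B ->
  smooth_on U (fun y => A y - B y).
Proof.
  intros. apply sm_ext with (fun y => A y + (fun _ => -1) y * B y).
  intro; ring. apply sm_plus; auto. apply sm_mult; auto. apply sm_const.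
Qed.

Lemma sm_sum4 U F : open4 U -> (forall a, (a < 4)%nat -> smooth_on U (F a)) ->
  smooth_on U (fun y => sum4 (fun a => F a y)).
Proof.
  intros HU H. unfold sum4.
  repeat apply sm_plus; auto; apply H; lia.
Qed.

Ltac smt := repeat (first
  [ apply sm_const
  | apply sm_sum4; [assumption|]; let a := fresh "a" in let Ha := fresh "Ha" in intros a Ha
  | apply sm_minus; [assumption| |]
  | apply sm_plus; [assumption| |]
  | apply sm_mult; [assumption| |]
  | apply sm_pd; [|assumption]
  | solve [auto] ]).

Lemma sm_Gam U g gi : open4 U ->
  (forall i j, (i < 4)%nat -> (j < 4)%nat -> smooth_on U (g i j)) ->
  (forall i j, (i < 4)%nat -> (j < 4)%nat -> smooth_on U (gi i j)) ->
  forall k i j, (k < 4)%nat -> (i < 4)%nat -> (j < 4)%nat -> smooth_on U (Gam g gi k i j).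
Proof.
  intros HU Hg Hgi k i j Hk Hi Hj.
  apply sm_ext with (fun y => (fun _ => / 2) y * sum4 (fun l => gi k l y *
      (pd (g j l) i y + pd (g i l) j y - pd (g i j) l y))); [reflexivity|].
  smt.
Qed.

Lemma sm_Rup U g gi : open4 U ->
  (forall i j, (i < 4)%nat -> (j < 4)%nat -> smooth_on U (g i j)) ->
  (forall i j, (i < 4)%nat -> (j < 4)%nat -> smooth_on U (gi i j)) ->
  forall a b c d, (a < 4)%nat -> (b < 4)%nat -> (c < 4)%nat -> (d < 4)%nat ->
  smooth_on U (Rup g gi a b c d).
Proof.
  intros HU Hg Hgi a b c d Ha Hb Hc Hd.
  pose proof (sm_Gam U g gi HU Hg Hgi) as HG.
  apply sm_ext with (fun y => pd (Gam g gi a d b) c y - pd (Gam g gi a c b) d y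
  + sum4 (fun e => Gam g gi a c e y * Gam g gi e d b y - Gam g gi a d e y * Gam g gi e c b y));
  [reflexivity|].
  smt.
Qed.

Lemma sm_Riem U g gi : open4 U ->
  (forall i j, (i < 4)%nat -> (j < 4)%nat -> smooth_on U (g i j)) ->
  (forall i j, (i < 4)%nat -> (j < 4)%nat -> smooth_on U (gi i j)) ->
  forall i j k l, (i < 4)%nat -> (j < 4)%nat -> (k < 4)%nat -> (l < 4)%nat ->
  smooth_on U (Riem g gi i j k l).
Proof.
  intros HU Hg Hgi i j k l Hi Hj Hk Hl.
  pose proof (sm_Rup U g gi HU Hg Hgi) as HR.
  apply sm_ext with (fun y => sum4 (fun a => g i a y * Rup g gi a j l k y)); [reflexivity|].
  smt.
Qed.

Lemma sm_Ric U g gi : open4 U ->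
  (forall i j, (i < 4)%nat -> (j < 4)%nat -> smooth_on U (g i j)) ->
  (forall i j, (i < 4)%nat -> (j < 4)%nat -> smooth_on U (gi i j)) ->
  forall j k, (j < 4)%nat -> (k < 4)%nat -> smooth_on U (Ric g gi j k).
Proof.
  intros HU Hg Hgi j k Hj Hk.
  pose proof (sm_Riem U g gi HU Hg Hgi) as HR.
  apply sm_ext with (fun y => sum4 (fun i => sum4 (fun l => gi i l y * Riem g gi i j k l y))); [reflexivity|].
  smt.
Qed.

Lemma sm_Wstar U g gi : open4 U ->
  (forall i j, (i < 4)%nat -> (j < 4)%nat -> smooth_on U (g i j)) ->
  (forall i j, (i < 4)%nat -> (j < 4)%nat -> smooth_on U (gi i j)) ->
  forall i j k l, (i < 4)%nat -> (j < 4)%nat -> (k < 4)%nat -> (l < 4)%nat ->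
  smooth_on U (Wstar g gi i j k l).
Proof.
  intros HU Hg Hgi i j k l Hi Hj Hk Hl.
  pose proof (sm_Riem U g gi HU Hg Hgi) as HR.
  pose proof (sm_Ric U g gi HU Hg Hgi) as HC.
  apply sm_ext with (fun y => Riem g gi i j k l y - (fun _ => / 3) y *
     (g j k y * Ric g gi i l y - g j l y * Ric g gi i k y)); [reflexivity|].
  smt.
Qed.

Lemma alg_nabla_gi (H Q E : nat -> nat -> R) i l :
  (i < 4)%nat -> (l < 4)%nat ->
  (forall a b, (a < 4)%nat -> (b < 4)%nat -> H a b = H b a) ->
  (forall a b, (a < 4)%nat -> (b < 4)%nat -> Q a b = Q b a) ->
  sum4 (fun a => (/2 * sum4 (fun b => H i b * (Q a b + E a b - E b a))) * H a l
               + (/2 * sum4 (fun b => H l b * (Q a b + E a b - E b a))) * H i a)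
  = sum4 (fun a => H i a * sum4 (fun b => Q a b * H b l)).
Proof.
  intros Hi Hl HS HQ. unfold sum4.
  rewrite (HS 0%nat l), (HS 1%nat l), (HS 2%nat l), (HS 3%nat l) by lia.
  rewrite (HQ 1%nat 0%nat), (HQ 2%nat 0%nat), (HQ 3%nat 0%nat), (HQ 2%nat 1%nat),
    (HQ 3%nat 1%nat), (HQ 3%nat 2%nat) by lia.
  field.
Qed.

Lemma alg_contr (G H : nat -> nat -> R) (W : nat -> nat -> nat -> nat -> R) j k :
  sum4 (fun i => sum4 (fun l =>
     (- sum4 (fun a => G i a * H a l + G l a * H i a)) * W i j k l
     + H i l * sum4 (fun a => G a i * W a j k l + G a j * W i a k l
                            + G a k * W i j a l + G a l * W i j k a)))
  - sum4 (fun a => G a j * sum4 (fun i => sum4 (fun l => H i l * W i a k l))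
                 + G a k * sum4 (fun i => sum4 (fun l => H i l * W i j a l))) = 0.
Proof. unfold sum4. ring. Qed.

Lemma sum4_ext F G : (forall a, (a < 4)%nat -> F a = G a) -> sum4 F = sum4 G.
Proof. intros H; unfold sum4; rewrite !H by lia; auto. Qed.

Lemma sum4_delta F j : (j < 4)%nat ->
  sum4 (fun i => F i * (if Nat.eqb i j then 1 else 0)) = F j.
Proof. intros Hj; case4 j; unfold sum4; simpl; ring. Qed.

Lemma pd_sum4 F i x : (forall a, (a < 4)%nat -> dex (F a) i x) ->
  pd (fun y => sum4 (fun a => F a y)) i x = sum4 (fun a => pd (F a) i x).
Proof.
  intros H. unfold sum4.
  assert (H0 := H 0%nat ltac:(lia)); assert (H1 := H 1%nat ltac:(lia));
  assert (H2 := H 2%nat ltac:(lia)); assert (H3 := H 3%nat ltac:(lia)).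
  rewrite (pd_plus (fun y => F 0%nat y + F 1%nat y + F 2%nat y) (F 3%nat)) by
    (auto; repeat apply dex_plus; auto).
  rewrite (pd_plus (fun y => F 0%nat y + F 1%nat y) (F 2%nat)) by
    (auto; repeat apply dex_plus; auto).
  rewrite (pd_plus (F 0%nat) (F 1%nat)) by auto.
  reflexivity.
Qed.

Lemma inv_sym A B : (forall a b, (a < 4)%nat -> (b < 4)%nat -> A a b = A b a) ->
  (forall i k, (i < 4)%nat -> (k < 4)%nat -> mul A B i k = if Nat.eqb i k then 1 else 0) ->
  forall a b, (a < 4)%nat -> (b < 4)%nat -> B a b = B b a.
Proof.
  intros HA HAB a b Ha Hb.
  set (BT := fun p q => B q p).
  assert (HT : forall i k, (i < 4)%nat -> (k < 4)%nat -> mul BT A i k = if Nat.eqb i k then 1 else 0).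
  { intros i k Hi Hk. rewrite Nat.eqb_sym, <- (HAB k i Hk Hi).
    unfold mul, sum4, BT. rewrite (HA 0%nat k), (HA 1%nat k), (HA 2%nat k), (HA 3%nat k) by lia.
    ring. }
  change (B b a) with (BT a b).
  transitivity (1 * B a b); [ring|].
  rewrite <- (mul_id_l (mul BT A) B 1 a b HT Ha).
  rewrite mul_assoc.
  rewrite (mul_id_r BT (mul A B) 1 a b HAB Hb). ring.
Qed.

Lemma alg_C (Gi Gm Rm Rc : nat -> nat -> R) j k : (j < 4)%nat ->
  (forall i j, (i < 4)%nat -> (j < 4)%nat ->
      sum4 (fun l => Gi i l * Gm j l) = if Nat.eqb i j then 1 else 0) ->
  sum4 (fun i => sum4 (fun l => Gi i l * Rc i l)) = 0 ->
  sum4 (fun i => sum4 (fun l => Gi i l * (Rm i l - / 3 * (Gm j k * Rc i l - Gm j l * Rc i k))))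
  = sum4 (fun i => sum4 (fun l => Gi i l * Rm i l)) + / 3 * Rc j k.
Proof.
  intros Hj HD HS.
  transitivity (sum4 (fun i => sum4 (fun l => Gi i l * Rm i l))
     - / 3 * (Gm j k * sum4 (fun i => sum4 (fun l => Gi i l * Rc i l))
              - sum4 (fun i => Rc i k * sum4 (fun l => Gi i l * Gm j l)))).
  { unfold sum4; ring. }
  rewrite HS.
  rewrite (sum4_ext (fun i => Rc i k * sum4 (fun l => Gi i l * Gm j l))
                    (fun i => Rc i k * (if Nat.eqb i j then 1 else 0))).
  2: { intros a Ha; rewrite HD; auto. }
  rewrite sum4_delta by auto. ring.
Qed.

Lemma sm_dex (U : Pt -> Prop) f i x : smooth_on U f -> U x -> (i < 4)%nat -> dex f i x.
Proof. intros H Hx Hi. apply (H nil); auto. Qed.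


Theorem mainTheorem10
  (U : Pt -> Prop) (g gi T : nat -> nat -> Pt -> R) (kappa : R) :
  open4 U ->
  (forall i j, (i < 4)%nat -> (j < 4)%nat -> smooth_on U (g i j)) ->
  (forall i j, (i < 4)%nat -> (j < 4)%nat -> smooth_on U (gi i j)) ->
  (forall i j x, (i < 4)%nat -> (j < 4)%nat -> U x -> g i j x = g j i x) ->
  (forall i k x, (i < 4)%nat -> (k < 4)%nat -> U x ->
     sum4 (fun j => g i j x * gi j k x) = (if Nat.eqb i k then 1 else 0)) ->
  lorentzian_on U g ->
  (* W*-symmetric *)
  (forall m i j k l x, (m < 4)%nat -> (i < 4)%nat -> (j < 4)%nat ->
     (k < 4)%nat -> (l < 4)%nat -> U x ->
     cov4 g gi (Wstar g gi) m i j k l x = 0) ->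
  (* Einstein's equation for a purely electromagnetic distribution *)
  kappa <> 0 ->
  (forall i j x, (i < 4)%nat -> (j < 4)%nat -> U x ->
     Ric g gi i j x = kappa * T i j x) ->
  (forall i j x, (i < 4)%nat -> (j < 4)%nat -> U x -> T i j x = T j i x) ->
  (forall x, U x -> sum4 (fun i => sum4 (fun j => gi i j x * T i j x)) = 0) ->
  forall m j k x, (m < 4)%nat -> (j < 4)%nat -> (k < 4)%nat -> U x ->
    cov2 g gi T m j k x = 0.
Proof.
  intros HU Hg Hgi Hgs Hinv _ HW Hkap HRic _ Htr m j k x Hm Hj Hk Hx.
  assert (Hgis : forall y, U y -> forall a b, (a < 4)%nat -> (b < 4)%nat -> gi a b y = gi b a y).
  { intros y Hy. apply (inv_sym (fun a b => g a b y) (fun a b => gi a b y)).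
    - intros; apply Hgs; auto.
    - intros; unfold mul; apply Hinv; auto. }
  assert (HD : forall y, U y -> forall i j, (i < 4)%nat -> (j < 4)%nat ->
      sum4 (fun l => gi i l y * g j l y) = if Nat.eqb i j then 1 else 0).
  { intros y Hy i0 j0 Hi0 Hj0. rewrite Nat.eqb_sym, <- (Hinv j0 i0 y Hj0 Hi0 Hy).
    apply sum4_ext; intros a Ha. rewrite (Hgis y Hy i0 a) by auto. ring. }
  assert (HS : forall y, U y -> sum4 (fun i => sum4 (fun l => gi i l y * Ric g gi i l y)) = 0).
  { intros y Hy. transitivity (kappa * sum4 (fun i => sum4 (fun j => gi i j y * T i j y))).
    - unfold sum4; rewrite !HRic by first [lia | assumption]; ring.
    - rewrite Htr; auto; ring. }
  set (Cf := fun p q y => sum4 (fun i => sum4 (fun l => gi i l y * Wstar g gi i p q l y))).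
  assert (HC : forall y, U y -> forall p q, (p < 4)%nat -> (q < 4)%nat ->
     Cf p q y = 4 / 3 * kappa * T p q y).
  { intros y Hy p q Hp Hq. unfold Cf, Wstar.
    rewrite (alg_C (fun a b => gi a b y) (fun a b => g a b y)
       (fun i l => Riem g gi i p q l y) (fun a b => Ric g gi a b y) p q Hp
       (HD y Hy) (HS y Hy)).
    change (sum4 (fun i => sum4 (fun l => gi i l y * Riem g gi i p q l y)))
      with (Ric g gi p q y).
    rewrite HRic by auto. field. }

  pose proof (sm_Wstar U g gi HU Hg Hgi) as HWs.
  assert (HinvL : forall i k, (i < 4)%nat -> (k < 4)%nat ->
     mul (fun a b => gi a b x) (fun a b => g a b x) i k = if Nat.eqb i k then 1 else 0).
  { apply left_inv. intros; unfold mul; apply Hinv; auto. }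
  assert (HD1 : forall i l, (i < 4)%nat -> (l < 4)%nat ->
     sum4 (fun j => pd (g i j) m x * gi j l x + g i j x * pd (gi j l) m x) = 0).
  { intros i l Hi Hl.
    assert (E : pd (fun y => sum4 (fun j => g i j y * gi j l y)) m x = 0).
    { rewrite (pd_congr U _ (fun _ => if Nat.eqb i l then 1 else 0)); auto.
      - apply pd_const.
      - intros y Hy; apply Hinv; auto. }
    rewrite (pd_sum4 (fun j y => g i j y * gi j l y)) in E.
    - rewrite <- E. apply sum4_ext; intros a Ha. symmetry. apply pd_mult;
      apply sm_dex with U; auto.
    - intros a Ha. apply dex_mult; apply sm_dex with U; auto. }
  assert (HP1 : forall i l, (i < 4)%nat -> (l < 4)%nat ->
     pd (gi i l) m x = - sum4 (fun a => gi i a x * sum4 (fun b => pd (g a b) m x * gi b l x))).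
  { intros i l Hi Hl.
    transitivity (mul (mul (fun a b => gi a b x) (fun a b => g a b x)) (fun a b => pd (gi a b) m x) i l).
    { rewrite (mul_id_l _ (fun a b => pd (gi a b) m x) 1 i l HinvL Hi). ring. }
    rewrite mul_assoc. unfold mul at 1.
    rewrite (sum4_ext _ (fun a => gi i a x * - sum4 (fun b => pd (g a b) m x * gi b l x))).
    - unfold sum4; ring.
    - intros a Ha. f_equal. pose proof (HD1 a l Ha Hl) as E. unfold mul.
      unfold sum4 in E |- *. lra. }
  assert (HQs : forall a b, (a < 4)%nat -> (b < 4)%nat -> pd (g a b) m x = pd (g b a) m x).
  { intros a b Ha Hb. apply pd_congr with U; auto. intros y Hy; apply Hgs; auto. }
  assert (HP : forall i l, (i < 4)%nat -> (l < 4)%nat ->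
     pd (gi i l) m x = - sum4 (fun a => Gam g gi i m a x * gi a l x + Gam g gi l m a x * gi i a x)).
  { intros i l Hi Hl. rewrite HP1 by auto. f_equal. symmetry.
    exact (alg_nabla_gi (fun a b => gi a b x) (fun a b => pd (g a b) m x)
      (fun a b => pd (g m b) a x) i l Hi Hl (fun a b Ha Hb => Hgis x Hx a b Ha Hb) HQs). }
  assert (HpdC : pd (Cf j k) m x = sum4 (fun i => sum4 (fun l =>
     (- sum4 (fun a => Gam g gi i m a x * gi a l x + Gam g gi l m a x * gi i a x))
        * Wstar g gi i j k l x
     + gi i l x * sum4 (fun a => Gam g gi a m i x * Wstar g gi a j k l x
          + Gam g gi a m j x * Wstar g gi i a k l x
          + Gam g gi a m k x * Wstar g gi i j a l x
          + Gam g gi a m l x * Wstar g gi i j k a x)))).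
  { unfold Cf.
    rewrite (pd_sum4 (fun i y => sum4 (fun l => gi i l y * Wstar g gi i j k l y))).
    - apply sum4_ext; intros i Hi.
      rewrite (pd_sum4 (fun l y => gi i l y * Wstar g gi i j k l y)).
      + apply sum4_ext; intros l Hl.
        rewrite pd_mult by (apply sm_dex with U; auto).
        rewrite HP by auto. f_equal. f_equal.
        pose proof (HW m i j k l x Hm Hi Hj Hk Hl Hx) as E. unfold cov4 in E. lra.
      + intros l Hl. apply dex_mult; apply sm_dex with U; auto.
    - intros i Hi. apply sm_dex with U; auto.
      apply sm_sum4; auto. intros l Hl. apply sm_mult; auto. }
  assert (HcovC : cov2 g gi Cf m j k x = 0).
  { unfold cov2. rewrite HpdC.
    exact (alg_contr (fun a b => Gam g gi a m b x) (fun a b => gi a b x)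
             (fun i j k l => Wstar g gi i j k l x) j k). }
  set (c := / (4 / 3 * kappa)).
  assert (HTc : forall y, U y -> forall p q, (p < 4)%nat -> (q < 4)%nat -> T p q y = c * Cf p q y).
  { intros y Hy p q Hp Hq. rewrite HC by auto. unfold c. field. auto. }
  assert (Hpd : pd (T j k) m x = c * pd (Cf j k) m x).
  { rewrite (pd_congr U (T j k) (fun y => (fun _ => c) y * Cf j k y)); auto.
    - rewrite pd_mult.
      + rewrite pd_const. ring.
      + apply dex_const.
      + apply sm_dex with U; auto. unfold Cf.
        apply sm_sum4; auto. intros i Hi. apply sm_sum4; auto. intros l Hl.
        apply sm_mult; auto.
    - intros y Hy. apply HTc; auto. }
  unfold cov2 in HcovC |- *. rewrite Hpd.
  unfold sum4 in HcovC |- *. rewrite !(HTc x Hx) by lia.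
  apply (f_equal (fun z => c * z)) in HcovC. rewrite Rmult_0_r in HcovC.
  rewrite <- HcovC. ring.
Qed.
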